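(* Let $X$ be a transitive subshift whose language $\mathcal L$ is aperiodic and satisfies RBC, with growth constant $K$. Let $w\in\mathcal L_n$ have minimal valid step $q$ in $\mathcal L$, and let $\mathcal X=\mathcal X_q(w)$ be the set of exit words of $w$ in $\mathcal L$ with step $q$. Then for every $x\in X$ and every $z\in\mathcal X$, $$\mathcal D(w,x)\ge\frac{1}{3K+9}\,\mathcal D(z,x).$$ Moreover, if $\mathcal X$ is finite and nonempty, then for every $x\in X$ there exists $z'\in\mathcal X$ with $$\mathcal D(z',x)\ge\frac{1}{(2K+3)|\mathcal X|}\,\mathcal D(w,x).$$
   Context: Subshift: nonempty closed $X\subseteq\mathcal A^{\mathbb N}$ ($\mathcal A$ finite) with $SX=X$, $S$ the left shift; transitive: for all nonempty open $U,V$ some $S^n(U)\cap V\neq\emptyset$. $\mathcal L$: finite nonempty words occurring in points of $X$; $\mathcal L_n$ those of length $n$. Aperiodic: no $P$ with $w_i=w_{i+P}$ for all $w\in\mathcal L$, $1\le i\le|w|-P$. For $w\in\mathcal L$: $Ex^\ell(w)=\{a:aw\in\mathcal L\}$, $Ex^r(w)=\{b:wb\in\mathcal L\}$; left/right special if these have $\ge2$ elements, bispecial if both; regular bispecial if exactly one $\hat a\in Ex^\ell(w)$ makes $\hat aw$ right special and exactly one $\hat b\in Ex^r(w)$ makes $w\hat b$ left special; RBC: all bispecial words of length $\ge n_0$ (some $n_0$) are regular bispecial; growth constant $K$: $|\mathcal L_{n+1}|-|\mathcal L_n|=K$ for all large $n$. Upper density: for $w\in\mathcal L$ with $n=|w|$,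 $r(w,x,j)=1$ if $x_{[k,k+n-1]}=w$ for some $(j-1)(K+1)n<k\le j(K+1)n$, else $0$; $\mathcal D(w,x)=\limsup_N\frac1N\sum_{j=1}^N r(w,x,j)$. For $n\ge2$, $w\in\mathcal A^n$ and integer $1\le q\le n/2$ with $w_{[q+1,n]}=w_{[1,n-q]}$, $w^{q\ast r}$ is the word of length $n+(r-1)q$ with $(w^{q\ast r})_{[q(i-1)+1,q(i-1)+n]}=w$ for $1\le i\le r$; $q$ is valid for $w$ in $\mathcal L$ if moreover $w^{q\ast2}\in\mathcal L$; minimal valid step = least valid step. An exit word for $w$ with step $q$ is $z=pw^{q\ast r}s$, $r\ge1$, $1\le|p|,|s|\le q$, with $z\in\mathcal L$; $pw^{q\ast r}$ not a suffix of $w^{q\ast(r+1)}$ but $p_{[2,|p|]}w^{q\ast r}$ is; $w^{q\ast r}s$ not a prefix of $w^{q\ast(r+1)}$ but $w^{q\ast r}s_{[1,|s|-1]}$ is (with $p_{[2,1]}$, $s_{[1,0]}$ empty). *)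

(* Defs.v *)
From Stdlib Require Import Reals Lia List Classical ClassicalEpsilon ClassicalDescription.
Import ListNotations.

Set Implicit Arguments.

Section Defs.
Variable A : Type.

(* Points of A^N: sequences indexed by nat.  For the density we use the
   1-based convention x = x_1 x_2 ..., with x_k := x (k-1). *)
Definition shift (x : nat -> A) : nat -> A := fun n => x (S n).

Definition agree_upto (x y : nat -> A) (m : nat) : Prop :=
  forall i, (i < m)%nat -> x i = y i.

(* closed in the product topology (A discrete) *)
Definition closed_set (X : (nat -> A) -> Prop) : Prop :=
  forall x, (forall m, exists y, X y /\ agree_upto x y m) -> X x.

Definition subshift (X : (nat -> A) -> Prop) : Prop :=
  (exists x, X x) /\ closed_set X /\
  (forall x, X x -> X (shift x)) /\
  (forall y, X y -> exists x, X x /\ shift x = y).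

Definition rel_open (X U : (nat -> A) -> Prop) : Prop :=
  (forall x, U x -> X x) /\
  (forall x, U x -> exists m, forall y, X y -> agree_upto x y m -> U y).

Definition transitive (X : (nat -> A) -> Prop) : Prop :=
  forall U V, rel_open X U -> rel_open X V ->
    (exists x, U x) -> (exists x, V x) ->
    exists (n : nat) y, U y /\ V (Nat.iter n shift y).

(* w occurs in x at (0-based) position i *)
Definition occurs_at (w : list A) (x : nat -> A) (i : nat) : Prop :=
  forall k, (k < length w)%nat -> nth_error w k = Some (x (i + k)%nat).

Definition lang (X : (nat -> A) -> Prop) (w : list A) : Prop :=
  w <> [] /\ exists x i, X x /\ occurs_at w x i.

Definition aperiodic (X : (nat -> A) -> Prop) : Prop :=
  forall P : nat, (1 <= P)%nat ->
    ~ (forall w, lang X w -> forall i, (i + P < length w)%nat ->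
         nth_error w i = nth_error w (i + P)%nat).

Definition ext_l X (w : list A) (a : A) : Prop := lang X (a :: w).
Definition ext_r X (w : list A) (b : A) : Prop := lang X (w ++ [b]).

Definition left_special X (w : list A) : Prop :=
  exists a b, a <> b /\ ext_l X w a /\ ext_l X w b.
Definition right_special X (w : list A) : Prop :=
  exists a b, a <> b /\ ext_r X w a /\ ext_r X w b.
Definition bispecial X (w : list A) : Prop :=
  left_special X w /\ right_special X w.

Definition regular_bispecial X (w : list A) : Prop :=
  (exists! a, ext_l X w a /\ right_special X (a :: w)) /\
  (exists! b, ext_r X w b /\ left_special X (w ++ [b])).

Definition RBC X : Prop :=
  exists n0 : nat, forall w, lang X w -> (n0 <= length w)%nat ->
    bispecial X w -> regular_bispecial X w.

Definition card_L X (n c : nat) : Prop :=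
  exists l : list (list A), NoDup l /\
    (forall w, In w l <-> (lang X w /\ length w = n)) /\ length l = c.

Definition growth_constant X (K : nat) : Prop :=
  exists N : nat, forall n c1 c2, (N <= n)%nat ->
    card_L X n c1 -> card_L X (S n) c2 -> c2 = (c1 + K)%nat.

(* r(w,x,j) = 1 iff x_[k,k+n-1] = w for some (j-1)(K+1)n < k <= j(K+1)n
   (1-based k, i.e. 0-based position k-1) *)
Definition r_prop (K : nat) (w : list A) (x : nat -> A) (j : nat) : Prop :=
  exists k : nat,
    ((j - 1) * (K + 1) * length w < k)%nat /\ (k <= j * (K + 1) * length w)%nat /\
    occurs_at w x (k - 1).

Definition r (K : nat) (w : list A) (x : nat -> A) (j : nat) : nat :=
  if excluded_middle_informative (r_prop K w x j) then 1%nat else 0%nat.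

Fixpoint rsum (K : nat) (w : list A) (x : nat -> A) (N : nat) : nat :=
  match N with
  | O => O
  | S N' => (rsum K w x N' + r K w x (S N'))%nat
  end.

Definition avg (K : nat) (w : list A) (x : nat -> A) (N : nat) : R :=
  INR (rsum K w x N) / INR N.

End Defs.

Definition is_limsup (u : nat -> R) (l : R) : Prop :=
  (forall eps : R, (0 < eps)%R -> exists N, forall n, (N <= n)%nat -> (u n < l + eps)%R) /\
  (forall eps : R, (0 < eps)%R -> forall N, exists n, (N <= n)%nat /\ (l - eps < u n)%R).

Definition limsup (u : nat -> R) : R := epsilon (inhabits 0%R) (is_limsup u).

Definition Dens {A : Type} (K : nat) (w : list A) (x : nat -> A) : R :=
  limsup (avg K w x).

Section Words.
Variable A : Type.

Definition qperiodic (w : list A) (q : nat) : Prop :=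
  forall i, (i + q < length w)%nat -> nth_error w i = nth_error w (i + q)%nat.

(* w^{q*r} for q-periodic w: (r-1) copies of w_[1,q] followed by w; this is
   the word of length n+(r-1)q having w at positions q(i-1)+1 .. q(i-1)+n. *)
Definition qpow (w : list A) (q r : nat) : list A :=
  concat (repeat (firstn q w) (r - 1)) ++ w.

Definition step_ok (w : list A) (q : nat) : Prop :=
  (2 <= length w)%nat /\ (1 <= q)%nat /\ (2 * q <= length w)%nat /\ qperiodic w q.

Definition valid_step X (w : list A) (q : nat) : Prop :=
  step_ok w q /\ lang X (qpow w q 2).

Definition min_valid_step X (w : list A) (q : nat) : Prop :=
  valid_step X w q /\ forall q', valid_step X w q' -> (q <= q')%nat.

Definition is_suffix (u v : list A) : Prop := exists t, t ++ u = v.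
Definition is_prefix (u v : list A) : Prop := exists t, u ++ t = v.

Definition exit_word X (w : list A) (q : nat) (z : list A) : Prop :=
  exists (p s : list A) (r : nat),
    (1 <= r)%nat /\
    (1 <= length p <= q)%nat /\ (1 <= length s <= q)%nat /\
    z = p ++ qpow w q r ++ s /\ lang X z /\
    ~ is_suffix (p ++ qpow w q r) (qpow w q (S r)) /\
    is_suffix (tl p ++ qpow w q r) (qpow w q (S r)) /\
    ~ is_prefix (qpow w q r ++ s) (qpow w q (S r)) /\
    is_prefix (qpow w q r ++ removelast s) (qpow w q (S r)).

End Words.

(* Main.v *)
Require Import Defs.
From Stdlib Require Import Reals List Lia Lra Classical ClassicalEpsilon.
From Coquelicot Require Lim_seq Rbar.
Import ListNotations.
Set Implicit Arguments.

Definition cong (q u v : nat) : Prop := exists a b, (u + a*q = v + b*q)%nat.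

Lemma cong_refl q u : cong q u u.
Proof. exists 0%nat, 0%nat. lia. Qed.
Lemma cong_sym q u v : cong q u v -> cong q v u.
Proof. intros [a [b H]]. exists b, a. lia. Qed.
Lemma cong_trans q u v s : cong q u v -> cong q v s -> cong q u s.
Proof. intros [a [b H]] [c [d H']]. exists (a+c)%nat, (b+d)%nat.
  rewrite !Nat.mul_add_distr_r. lia. Qed.
Lemma cong_mod q k : cong q k (k mod q).
Proof. exists 0%nat, (k / q)%nat. pose proof (Nat.div_mod_eq k q). lia. Qed.
Lemma cong_addq q k d : cong q (k + d*q) k.
Proof. exists 0%nat, d. lia. Qed.
Lemma cong_plus q u v c : cong q u v -> cong q (u + c) (v + c).
Proof. intros [a [b H]]. exists a, b. lia. Qed.

Definition per {T : Type} (f : nat -> T) (q a b : nat) : Prop :=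
  forall k, (a <= k)%nat -> (k + q < b)%nat -> f k = f (k + q)%nat.

Lemma per_mult {T} (f : nat -> T) q a b : per f q a b ->
  forall d u, (a <= u)%nat -> (u + d*q < b)%nat -> f u = f (u + d*q)%nat.
Proof.
  intros Hp d. induction d as [|d IHd]; intros u Hu Hb.
  - f_equal. lia.
  - simpl in Hb. rewrite (Hp u Hu) by lia.
    rewrite (IHd (u+q)%nat) by lia. f_equal. simpl. lia.
Qed.

Lemma per_cong {T} (f : nat -> T) q a b u v : per f q a b -> (1 <= q)%nat ->
  (a <= u < b)%nat -> (a <= v < b)%nat -> cong q u v -> f u = f v.
Proof.
  intros Hp Hq Hu Hv [al [be H]].
  destruct (Nat.le_gt_cases u v) as [Huv|Huv].
  - assert (al >= be)%nat.
    { destruct (Nat.le_gt_cases be al); auto.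
      assert (al * q < be * q)%nat by (apply Nat.mul_lt_mono_pos_r; lia). lia. }
    assert (v = u + (al - be) * q)%nat by (rewrite Nat.mul_sub_distr_r; nia).
    subst v. apply (per_mult Hp); lia.
  - assert (be >= al)%nat.
    { destruct (Nat.le_gt_cases al be); auto.
      assert (be * q < al * q)%nat by (apply Nat.mul_lt_mono_pos_r; lia). lia. }
    assert (u = v + (be - al) * q)%nat by (rewrite Nat.mul_sub_distr_r; nia).
    subst u. symmetry. apply (per_mult Hp); lia.
Qed.

Lemma qper_per {A} (w : list A) q : qperiodic w q <-> per (nth_error w) q 0 (length w).
Proof. unfold qperiodic, per. split; intros H k. intros _. apply H. apply H. lia. Qed.

Lemma nth_concat_repeat {A} (u : list A) c k : (1 <= length u)%nat -> (k < c * length u)%nat ->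
  nth_error (concat (repeat u c)) k = nth_error u (k mod length u).
Proof.
  intros Hu. revert k. induction c as [|c IHc]; intros k Hk; simpl in *. lia.
  destruct (Nat.lt_ge_cases k (length u)).
  - rewrite nth_error_app1 by auto. rewrite Nat.mod_small; auto.
  - rewrite nth_error_app2 by auto. rewrite IHc by lia.
    f_equal. replace k with ((k - length u) + 1 * length u)%nat at 2 by lia.
    rewrite Nat.Div0.mod_add. reflexivity.
Qed.

Lemma length_qpow {A} (w : list A) q r : (q <= length w)%nat ->
  length (qpow w q r) = ((r-1)*q + length w)%nat.
Proof.
  intros H. unfold qpow. rewrite length_app. f_equal.
  induction (r-1)%nat; simpl; auto. rewrite length_app, IHn, length_firstn. lia.
Qed.

Lemma nth_qpow {A} (w : list A) q r k : qperiodic w q -> (1 <= q <= length w)%nat ->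
  (k < length (qpow w q r))%nat -> nth_error (qpow w q r) k = nth_error w (k mod q).
Proof.
  intros Hper Hq Hk. rewrite length_qpow in Hk by lia. unfold qpow.
  assert (Hlf : length (firstn q w) = q) by (rewrite length_firstn; lia).
  assert (Hlc : length (concat (repeat (firstn q w) (r-1))) = ((r-1)*q)%nat).
  { clear Hk. induction (r-1)%nat; simpl; auto. rewrite length_app, IHn, Hlf. lia. }
  destruct (Nat.lt_ge_cases k ((r-1)*q)).
  - rewrite nth_error_app1 by lia. rewrite nth_concat_repeat by lia.
    rewrite Hlf, nth_error_firstn.
    replace (k mod q <? q)%nat with true; auto. symmetry. apply Nat.ltb_lt, Nat.mod_upper_bound; lia.
  - rewrite nth_error_app2 by lia. rewrite Hlc.
    apply qper_per in Hper. apply (per_cong Hper); try lia.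
    + split; [lia|]. pose proof (Nat.mod_upper_bound k q). lia.
    + apply cong_trans with k. exists ((r-1))%nat, 0%nat. lia. apply cong_mod.
Qed.

Lemma w_cong {A} (w : list A) q u v : qperiodic w q -> (1 <= q)%nat ->
  (u < length w)%nat -> (v < length w)%nat -> cong q u v -> nth_error w u = nth_error w v.
Proof. intros Hp Hq Hu Hv Hc. apply qper_per in Hp. apply (per_cong Hp); auto; lia. Qed.

Lemma qpow_cong {A} (w : list A) q r k j : qperiodic w q -> (1 <= q <= length w)%nat ->
  (k < length (qpow w q r))%nat -> (j < length w)%nat -> cong q k j ->
  nth_error (qpow w q r) k = nth_error w j.
Proof.
  intros Hp Hq Hk Hj Hc. rewrite nth_qpow by auto. apply (w_cong Hp); try lia.
  pose proof (Nat.mod_upper_bound k q). lia.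
  apply cong_trans with k. apply cong_sym, cong_mod. auto.
Qed.

Lemma qpow_cong2 {A} (w : list A) q r k j : qperiodic w q -> (1 <= q <= length w)%nat ->
  (k < length (qpow w q r))%nat -> (j < length (qpow w q r))%nat -> cong q k j ->
  nth_error (qpow w q r) k = nth_error (qpow w q r) j.
Proof.
  intros Hp Hq Hk Hj Hc. rewrite (@nth_qpow _ w q r j) by auto.
  apply qpow_cong; try assumption.
  + pose proof (Nat.mod_upper_bound j q). lia.
  + apply cong_trans with j; auto. apply cong_mod.
Qed.

Definition word_of {A} (x : nat -> A) (c L : nat) : list A := map x (seq c L).

Lemma length_word_of {A} (x : nat -> A) c L : length (word_of x c L) = L.
Proof. unfold word_of. rewrite length_map, length_seq. auto. Qed.

Lemma nth_word_of {A} (x : nat -> A) c L k : (k < L)%nat -> nth_error (word_of x c L) k = Some (x (c+k)%nat).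
Proof. intros H. unfold word_of. rewrite nth_error_map, nth_error_seq.
  replace (k <? L)%nat with true; auto. symmetry; apply Nat.ltb_lt; auto. Qed.

Lemma nth_word_of_none {A} (x : nat -> A) c L k : (L <= k)%nat -> nth_error (word_of x c L) k = None.
Proof. intros H. apply nth_error_None. rewrite length_word_of. auto. Qed.

Lemma word_of_app {A} (x : nat -> A) c L1 L2 :
  word_of x c (L1 + L2) = word_of x c L1 ++ word_of x (c + L1) L2.
Proof. unfold word_of. rewrite seq_app, map_app. auto. Qed.

Lemma occurs_word_of {A} (x : nat -> A) c L : occurs_at (word_of x c L) x c.
Proof. intros k Hk. rewrite length_word_of in Hk. apply nth_word_of; auto. Qed.

Lemma occurs_eq_word {A} (u : list A) x c : occurs_at u x c -> u = word_of x c (length u).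
Proof.
  intros H. apply nth_error_ext. intros k.
  destruct (Nat.lt_ge_cases k (length u)).
  - rewrite nth_word_of by auto. apply H; auto.
  - rewrite nth_word_of_none by auto. apply nth_error_None; auto.
Qed.

Lemma occurs_app {A} (u v : list A) x c :
  occurs_at (u ++ v) x c <-> occurs_at u x c /\ occurs_at v x (c + length u).
Proof.
  unfold occurs_at. rewrite length_app. split.
  - intros H. split.
    + intros k Hk. rewrite <- (H k) by lia. rewrite nth_error_app1; auto.
    + intros k Hk. replace (c + length u + k)%nat with (c + (length u + k))%nat by lia.
      rewrite <- (H (length u + k)%nat) by lia. rewrite nth_error_app2 by lia. f_equal; lia.
  - intros [H1 H2] k Hk. destruct (Nat.lt_ge_cases k (length u)).
    + rewrite nth_error_app1; auto.
    + rewrite nth_error_app2 by lia. rewrite H2 by lia. f_equal. f_equal. lia.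
Qed.

Lemma occurs_qpow_w {A} (w : list A) q r x c t : qperiodic w q -> (1 <= q <= length w)%nat ->
  occurs_at (qpow w q r) x c -> (t < r)%nat -> occurs_at w x (c + t*q).
Proof.
  intros Hp Hq H Ht k Hk.
  assert (Hl : length (qpow w q r) = ((r-1)*q + length w)%nat) by (apply length_qpow; lia).
  rewrite <- (@qpow_cong _ w q r (t*q + k)%nat k Hp Hq); try lia.
  - replace (c + t*q + k)%nat with (c + (t*q+k))%nat by lia. apply H. rewrite Hl. nia.
  - rewrite Hl. nia.
  - exists 0%nat, t. lia.
Qed.

Definition exit_shape {A} (w : list A) (q : nat) (z : list A) : Prop :=
  exists (p s : list A) (r : nat),
    (1 <= r)%nat /\
    (1 <= length p <= q)%nat /\ (1 <= length s <= q)%nat /\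
    z = p ++ qpow w q r ++ s /\
    ~ is_suffix (p ++ qpow w q r) (qpow w q (S r)) /\
    is_suffix (tl p ++ qpow w q r) (qpow w q (S r)) /\
    ~ is_prefix (qpow w q r ++ s) (qpow w q (S r)) /\
    is_prefix (qpow w q r ++ removelast s) (qpow w q (S r)).

Lemma exit_word_iff {A} X (w : list A) q z : exit_word X w q z <-> exit_shape w q z /\ lang X z.
Proof.
  unfold exit_word, exit_shape. split.
  - intros (p & s & r & H1 & H2 & H3 & H4 & H5 & H6 & H7 & H8 & H9).
    split; auto. exists p, s, r; tauto.
  - intros [(p & s & r & H1 & H2 & H3 & H4 & H6 & H7 & H8 & H9) H5].
    exists p, s, r; tauto.
Qed.

Lemma exit_from_run {A} (w : list A) q (y : nat -> A) a b i :
  qperiodic w q -> (1 <= q)%nat -> (2*q <= length w)%nat ->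
  (1 <= a <= i)%nat -> (i + length w <= b)%nat -> occurs_at w y i ->
  per y q a b -> y (a-1)%nat <> y (a-1+q)%nat -> y b <> y (b-q)%nat ->
  exit_shape w q (word_of y (a-1) (b-a+2)).
Proof.
  intros Hp Hq Hn Ha Hb Hocc Hrun Hl Hr.
  set (n := length w) in *.
  pose proof (Nat.div_mod_eq (i-a) q) as E1.
  pose proof (Nat.mod_upper_bound (i-a) q ltac:(lia)) as E2.
  set (t := ((i-a) mod q)%nat) in *. set (d1 := ((i-a)/q)%nat) in *.
  set (st := (a + t)%nat).
  pose proof (Nat.div_mod_eq (b-st-n) q) as E3.
  pose proof (Nat.mod_upper_bound (b-st-n) q ltac:(lia)) as E4.
  set (d2 := ((b-st-n)/q)%nat) in *. set (t2 := ((b-st-n) mod q)%nat) in *.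
  set (r := S d2).
  assert (Hlq : forall R, length (qpow w q R) = ((R-1)*q + n)%nat) by (intros; apply length_qpow; lia).
  assert (HL : length (qpow w q r) = (d2*q + n)%nat) by (rewrite Hlq; unfold r; f_equal; f_equal; lia).
  set (L := (d2*q + n)%nat) in *.
  set (e := (st + L)%nat).
  assert (He : (e + t2 = b)%nat) by (unfold e, L, st; nia).
  assert (PAT : forall R idx pos, (idx < length (qpow w q R))%nat -> (a <= pos < b)%nat ->
            cong q pos (st + idx) -> nth_error (qpow w q R) idx = Some (y pos)).
  { intros R idx pos Hidx Hpos Hc. rewrite nth_qpow by (auto; lia).
    pose proof (Nat.mod_upper_bound idx q ltac:(lia)).
    rewrite (@per_cong _ y q a b pos (i + idx mod q)%nat Hrun Hq); try lia.
    - rewrite (Hocc (idx mod q)) by lia. reflexivity.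
    - apply cong_trans with (st + idx)%nat; auto.
      apply cong_trans with (st + idx mod q)%nat. rewrite (Nat.add_comm st), (Nat.add_comm st). apply cong_plus. apply cong_mod.
      exists d1, 0%nat. unfold st. lia. }
  assert (HV : length (qpow w q (S r)) = (L + q)%nat) by (rewrite Hlq; unfold L, r; nia).
  assert (EQ1 : qpow w q r = word_of y st L).
  { apply nth_error_ext. intros k. destruct (Nat.lt_ge_cases k L).
    - rewrite nth_word_of by auto. apply PAT; try lia. apply cong_refl.
    - rewrite nth_word_of_none by auto. apply nth_error_None. lia. }
  assert (Htl : tl (word_of y (a-1) (t+1)) = word_of y a t).
  { unfold word_of. replace (t+1)%nat with (S t) by lia. simpl. f_equal. f_equal. lia. }
  assert (Hrl : removelast (word_of y e (t2+1)) = word_of y e t2).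
  { rewrite word_of_app. unfold word_of at 2. simpl. apply removelast_last. }
  exists (word_of y (a-1) (t+1)), (word_of y e (t2+1)), r.
  rewrite Htl, Hrl, EQ1, !length_word_of.
  assert (Hpq : word_of y (a-1) (t+1) ++ word_of y st L = word_of y (a-1) (t+1+L)).
  { rewrite (word_of_app y (a-1) (t+1) L). f_equal. f_equal. unfold st. lia. }
  assert (Hqs : forall d, word_of y st L ++ word_of y e d = word_of y st (L+d)).
  { intros d. rewrite word_of_app. reflexivity. }
  assert (Htq : word_of y a t ++ word_of y st L = word_of y a (t+L)).
  { rewrite word_of_app. reflexivity. }
  split; [lia|]. split; [lia|]. split; [lia|]. split.
  { rewrite Hqs. replace (b-a+2)%nat with (t+1 + (L+(t2+1)))%nat by (unfold e in He; unfold st in *; lia). rewrite word_of_app. f_equal. f_equal. unfold st; lia. }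
  split.
  { rewrite Hpq. intros [t0 Ht0].
    assert (Hlen : (length t0 + (t+1+L) = L + q)%nat).
    { rewrite <- HV, <- Ht0, length_app, length_word_of. reflexivity. }
    assert (h1 : nth_error (qpow w q (S r)) (length t0) = Some (y (a-1)%nat)).
    { rewrite <- Ht0, nth_error_app2 by lia. rewrite Nat.sub_diag, nth_word_of by lia.
      f_equal. f_equal. lia. }
    assert (h2 : nth_error (qpow w q (S r)) (length t0 + q) = Some (y (a-1+q)%nat)).
    { rewrite <- Ht0, nth_error_app2 by lia. rewrite nth_word_of by lia.
      f_equal. f_equal. lia. }
    rewrite (@qpow_cong2 _ w q (S r) (length t0) (length t0 + q)%nat) in h1; try lia; auto.
    - rewrite h1 in h2. injection h2. auto.
    - exists 1%nat, 0%nat. lia. }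
  split.
  { rewrite Htq. exists (firstn (q - t) (qpow w q (S r))).
    apply nth_error_ext. intros k.
    assert (Hlf : length (firstn (q - t) (qpow w q (S r))) = (q - t)%nat)
      by (rewrite length_firstn; lia).
    destruct (Nat.lt_ge_cases k (q - t)).
    - rewrite nth_error_app1 by lia. rewrite nth_error_firstn.
      replace (k <? q - t)%nat with true; auto. symmetry; apply Nat.ltb_lt; auto.
    - rewrite nth_error_app2 by lia. rewrite Hlf.
      destruct (Nat.lt_ge_cases k (L + q)).
      + rewrite nth_word_of by lia. symmetry. apply PAT; try lia.
        exists 1%nat, 0%nat. unfold st. lia.
      + rewrite nth_word_of_none by lia. symmetry. apply nth_error_None. lia. }
  split.
  { rewrite Hqs. intros [t0 Ht0].
    assert (Hlen : (L + (t2+1) + length t0 = L + q)%nat).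
    { rewrite <- HV, <- Ht0, length_app, length_word_of. reflexivity. }
    assert (h1 : nth_error (qpow w q (S r)) (L + t2) = Some (y b)).
    { rewrite <- Ht0, nth_error_app1 by (rewrite length_word_of; lia).
      rewrite nth_word_of by lia. f_equal. f_equal. lia. }
    assert (h2 : nth_error (qpow w q (S r)) (L + t2 - q) = Some (y (b-q)%nat)).
    { rewrite <- Ht0, nth_error_app1 by (rewrite length_word_of; lia).
      rewrite nth_word_of by lia. f_equal. f_equal. unfold L in *. lia. }
    rewrite (@qpow_cong2 _ w q (S r) (L+t2) (L + t2 - q)%nat) in h1; try lia; auto.
    - rewrite h1 in h2. injection h2. auto.
    - exists 0%nat, 1%nat. unfold L in *. lia. }
  { rewrite Hqs. exists (skipn (L+t2) (qpow w q (S r))).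
    apply nth_error_ext. intros k. destruct (Nat.lt_ge_cases k (L + t2)).
    - rewrite nth_error_app1 by (rewrite length_word_of; lia).
      rewrite nth_word_of by lia. symmetry. apply PAT; try lia. apply cong_refl.
    - rewrite nth_error_app2 by (rewrite length_word_of; lia).
      rewrite length_word_of, nth_error_skipn. f_equal. lia. }
Qed.

Lemma exit_decomp {A} (w : list A) q z : qperiodic w q -> (1 <= q)%nat -> (2*q <= length w)%nat ->
  exit_shape w q z -> exists lp ls r, (1 <= r)%nat /\ (1 <= lp <= q)%nat /\ (1 <= ls <= q)%nat /\
   length z = (lp + ((r-1)*q + length w) + ls)%nat /\
   forall x c, occurs_at z x c -> forall t, (t < r)%nat -> occurs_at w x (c + lp + t*q).
Proof.
  intros Hp Hq Hn (p & s & r & Hr & Hlp & Hls & Hz & _).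
  exists (length p), (length s), r. repeat split; try lia.
  - subst z. rewrite !length_app, length_qpow by lia. lia.
  - intros x c Hc t Ht. subst z. apply occurs_app in Hc as [_ Hc].
    apply occurs_app in Hc as [Hc _]. apply (@occurs_qpow_w _ w q r x (c + length p)%nat t Hp); auto. lia.
Qed.

Lemma exit_left_break {A} (w : list A) q z y c : qperiodic w q -> (1 <= q)%nat -> (2*q <= length w)%nat ->
  exit_shape w q z -> occurs_at z y c -> y c <> y (c + q)%nat.
Proof.
  intros Hp Hq Hn (p & s & r & Hr & Hlp & Hls & Hz & Hns & [t1 Ht1] & _) Hocc Heq.
  apply Hns. clear Hns.
  assert (Hlq : forall R, length (qpow w q R) = ((R-1)*q + length w)%nat) by (intros; apply length_qpow; lia).
  set (V := qpow w q (S r)) in *. set (Q := qpow w q r) in *.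
  assert (HV : length V = (length Q + q)%nat) by (unfold V, Q; rewrite !Hlq; simpl; nia).
  destruct p as [|p0 p']; [simpl in Hlp; lia|]. simpl in Ht1, Hlp.
  assert (Hlt1 : (length t1 + length p' + length Q = length Q + q)%nat).
  { rewrite <- HV, <- Ht1, !length_app. lia. }
  assert (HQ : (length w <= length Q)%nat) by (unfold Q; rewrite Hlq; nia).
  assert (Hzk : forall k, (k < length ((p0 :: p') ++ Q))%nat -> nth_error ((p0::p') ++ Q) k = Some (y (c+k)%nat)).
  { intros k Hk. subst z. rewrite app_assoc in Hocc. rewrite <- (nth_error_app1 _ s Hk). apply Hocc.
    rewrite !length_app. rewrite length_app in Hk. lia. }
  exists (firstn (length t1 - 1) V).
  assert (Hlf : length (firstn (length t1 - 1) V) = (length t1 - 1)%nat) by (rewrite length_firstn; lia).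
  apply nth_error_ext. intros k.
  destruct (Nat.lt_ge_cases k (length t1 - 1)).
  - rewrite nth_error_app1 by lia. rewrite nth_error_firstn.
    replace (k <? length t1 - 1)%nat with true; auto. symmetry; apply Nat.ltb_lt; auto.
  - rewrite nth_error_app2 by lia. rewrite Hlf.
    destruct (Nat.eq_dec k (length t1 - 1)) as [Hk|Hk].
    + subst k. rewrite Nat.sub_diag.
      unfold V; rewrite (@qpow_cong2 _ w q (S r) (length t1 - 1) (length t1 - 1 + q)%nat) by first [assumption | (split; lia) | (exists 1%nat, 0%nat; lia) | (fold V; lia)].
      fold V. rewrite <- Ht1. rewrite (nth_error_app2 t1) by lia.
      replace (length t1 - 1 + q - length t1)%nat with (q - 1)%nat by lia.
      assert (E1 := Hzk 0%nat ltac:(rewrite length_app; simpl; lia)).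
      assert (E2 := Hzk q ltac:(rewrite length_app; simpl; lia)).
      simpl in E1.
      simpl. rewrite E1, Nat.add_0_r, Heq, <- E2.
      assert (Hq1 : q = S (q-1)) by lia. rewrite Hq1 at 1. reflexivity.
    + replace (k - (length t1 - 1))%nat with (S (k - length t1)) by lia.
      simpl. rewrite <- Ht1, (nth_error_app2 t1) by lia. reflexivity.
Qed.

Lemma exit_right_break {A} (w : list A) q z y c : qperiodic w q -> (1 <= q)%nat -> (2*q <= length w)%nat ->
  exit_shape w q z -> occurs_at z y c -> y (c + length z - 1)%nat <> y (c + length z - 1 - q)%nat.
Proof.
  intros Hp Hq Hn (p & s & r & Hr & Hlp & Hls & Hz & _ & _ & Hnp & [t1 Ht1]) Hocc Heq.
  apply Hnp. clear Hnp.
  assert (Hlq : forall R, length (qpow w q R) = ((R-1)*q + length w)%nat) by (intros; apply length_qpow; lia).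
  set (V := qpow w q (S r)) in *. set (Q := qpow w q r) in *.
  assert (HV : length V = (length Q + q)%nat) by (unfold V, Q; rewrite !Hlq; simpl; nia).
  assert (HQ : (length w <= length Q)%nat) by (unfold Q; rewrite Hlq; nia).
  assert (Hsn : s <> []) by (intro; subst; simpl in Hls; lia).
  pose proof (app_removelast_last (List.hd (y 0%nat) s) Hsn) as Hs.
  set (s' := removelast s) in *. set (sl := last s (List.hd (y 0%nat) s)) in *.
  assert (Hls' : length s = S (length s')) by (rewrite Hs at 1; rewrite length_app; simpl; lia).
  assert (Hlt1 : (length Q + length s' + length t1 = length Q + q)%nat).
  { rewrite <- HV, <- Ht1, !length_app. lia. }
  assert (Hz' : length z = (length p + length Q + length s)%nat) by (subst z; rewrite !length_app; lia).
  assert (Hzk : forall k, (k < length (Q ++ s))%nat -> nth_error (Q ++ s) k = Some (y (c + length p + k)%nat)).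
  { intros k Hk. replace (c + length p + k)%nat with (c + (length p + k))%nat by lia.
    subst z. rewrite <- Hocc by (rewrite !length_app; rewrite length_app in Hk; lia).
    rewrite (nth_error_app2 p) by lia. f_equal. lia. }
  exists (skipn (length Q + length s) V).
  apply nth_error_ext. intros k.
  destruct (Nat.lt_ge_cases k (length Q + length s)).
  - rewrite nth_error_app1 by (rewrite length_app; lia).
    destruct (Nat.eq_dec k (length Q + length s'))%nat as [Hk|Hk].
    + rewrite Hzk by (rewrite length_app; lia).
      unfold V; rewrite (@qpow_cong2 _ w q (S r) k (k - q)%nat) by first [assumption | (split; lia) | (exists 0%nat, 1%nat; lia) | (fold V; lia)].
      fold V. rewrite <- Ht1, nth_error_app1 by (rewrite length_app; lia).
      assert (E := Hzk (k - q)%nat ltac:(rewrite length_app; lia)).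
      rewrite Hs in E at 1. rewrite app_assoc, nth_error_app1 in E by (rewrite length_app; lia).
      rewrite E. f_equal. rewrite Hz' in Heq.
      replace (c + length p + k)%nat with (c + (length p + length Q + length s) - 1)%nat by lia.
      rewrite Heq. f_equal. lia.
    + rewrite Hs, app_assoc, nth_error_app1 by (rewrite length_app; lia).
      rewrite <- Ht1. rewrite (nth_error_app1 (Q ++ s') t1); auto. rewrite length_app; lia.
  - rewrite nth_error_app2 by (rewrite length_app; lia).
    rewrite length_app, nth_error_skipn. f_equal. lia.
Qed.

Lemma max_below (P : nat -> Prop) N : (exists k, (k < N)%nat /\ P k) ->
  exists k, (k < N)%nat /\ P k /\ forall k', (k < k' < N)%nat -> ~ P k'.
Proof.
  induction N as [|N IHN]; intros [k [Hk HP]]; [lia|].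
  destruct (classic (P N)).
  - exists N. split; [lia|]. split; auto. intros; lia.
  - destruct IHN as [k0 [H1 [H2 H3]]]. exists k. split; auto. assert (k <> N) by (intro; subst; auto). lia.
    exists k0. split; [lia|]. split; auto. intros k' Hk'.
    destruct (Nat.eq_dec k' N); [subst; auto|]. apply H3; lia.
Qed.

Lemma min_above (P : nat -> Prop) lo : (exists k, (lo <= k)%nat /\ P k) ->
  exists k, (lo <= k)%nat /\ P k /\ forall k', (lo <= k' < k)%nat -> ~ P k'.
Proof.
  intros [k [Hk HP]].
  assert (G : forall m k, (k <= m)%nat -> (lo <= k)%nat -> P k ->
     exists k, (lo <= k)%nat /\ P k /\ forall k', (lo <= k' < k)%nat -> ~ P k').
  { induction m as [|m IHm]; intros k1 H1 H2 H3.
    - exists k1. split; auto. split; auto. intros; lia.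
    - destruct (classic (exists k', (lo <= k' < k1)%nat /\ P k')) as [[k' [Hk' HP']]|Hno].
      + apply (IHm k'); auto; lia.
      + exists k1. split; auto. split; auto. intros k' Hk' HP'. apply Hno. eauto. }
  apply (G k k); auto.
Qed.

Lemma cong_plus_l q u v c : cong q u v -> cong q (c + u) (c + v).
Proof. intros [a [b H]]. exists a, b. lia. Qed.

Lemma per_from_w {A} (w : list A) q (x : nat -> A) c i d : qperiodic w q -> occurs_at w x i ->
  (forall k, (c <= k < i)%nat -> x k = x (k+q)%nat) ->
  (forall k, (i + length w <= k < d)%nat -> x k = x (k-q)%nat) ->
  (q <= length w)%nat -> per x q c d.
Proof.
  intros Hp Ho Hl Hr Hq k Hk1 Hk2.
  destruct (Nat.lt_ge_cases (k+q) (i + length w)).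
  - destruct (Nat.lt_ge_cases k i).
    + apply Hl. lia.
    + assert (E1 := Ho (k - i)%nat ltac:(lia)). assert (E2 := Ho (k - i + q)%nat ltac:(lia)).
      rewrite Hp in E1 by lia. rewrite E1 in E2. injection E2. intros E.
      replace (k+q)%nat with (i + (k - i + q))%nat by lia. rewrite <- E. f_equal. lia.
  - rewrite (Hr (k+q)%nat) by lia. f_equal. lia.
Qed.

Lemma occ_qpow_of_per {A} (w : list A) q (x : nat -> A) c d i R : qperiodic w q -> (1 <= q <= length w)%nat ->
  per x q c d -> occurs_at w x i -> (c <= i)%nat -> (i + length w <= d)%nat -> cong q c i ->
  (c + length (qpow w q R) <= d)%nat -> occurs_at (qpow w q R) x c.
Proof.
  intros Hp Hq Hper Ho Hci Hid Hc Hl k Hk.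
  rewrite nth_qpow by auto. pose proof (Nat.mod_upper_bound k q ltac:(lia)).
  rewrite Ho by lia. f_equal. apply (per_cong Hper); try lia.
  apply cong_trans with (c + k mod q)%nat.
  rewrite !(Nat.add_comm _ (k mod q)). apply cong_plus_l. apply cong_sym. auto.
  apply cong_plus_l. apply cong_sym, cong_mod.
Qed.

Lemma run_exit {A} (w : list A) q (y : nat -> A) i : qperiodic w q -> (1 <= q)%nat -> (2*q <= length w)%nat ->
  occurs_at w y i ->
  (exists k0, (k0 < i)%nat /\ y k0 <> y (k0+q)%nat) ->
  (exists k1, (i + length w <= k1)%nat /\ y k1 <> y (k1 - q)%nat) ->
  exists a b, (1 <= a <= i)%nat /\ (i + length w <= b)%nat /\ y b <> y (b-q)%nat /\
    (forall k, (i + length w <= k < b)%nat -> y k = y (k-q)%nat) /\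
    exit_shape w q (word_of y (a-1) (b-a+2)).
Proof.
  intros Hp Hq Hn Ho HL HR.
  destruct (@max_below (fun k => y k <> y (k+q)%nat) i HL) as [k0 [Hk0 [Hb0 Hm0]]].
  destruct (@min_above (fun k => y k <> y (k-q)%nat) (i + length w)%nat HR) as [b [Hb [Hbb Hmb]]].
  assert (Hmb' : forall k, (i + length w <= k < b)%nat -> y k = y (k-q)%nat).
  { intros k Hk. apply NNPP. apply Hmb. auto. }
  exists (S k0), b. split; [lia|]. split; auto. split; auto. split; auto.
  apply (exit_from_run (i := i)); auto; try lia.
  - apply (per_from_w Hp Ho); auto; try lia. intros k Hk. apply NNPP. apply Hm0. lia.
  - replace (S k0 - 1)%nat with k0 by lia. auto.
Qed.

Lemma iter_shift {A} n (y : nat -> A) k : Nat.iter n (@shift A) y k = y (n + k)%nat.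
Proof. revert k. induction n as [|n IHn]; intros k; simpl; auto. unfold shift. rewrite IHn. f_equal. lia. Qed.

Lemma iter_shift_X {A} (X : (nat -> A) -> Prop) n y : subshift X -> X y -> X (Nat.iter n (@shift A) y).
Proof. intros [_ [_ [H _]]] Hy. induction n as [|n IHn]; simpl; auto. Qed.

Lemma preimage_T {A} (X : (nat -> A) -> Prop) T y : subshift X -> X y ->
  exists y', X y' /\ forall k, y' (T + k)%nat = y k.
Proof.
  intros HX Hy. induction T.
  - exists y. split; auto.
  - destruct IHT as [y' [Hy' He]]. destruct HX as [_ [_ [_ Hs]]].
    destruct (Hs y' Hy') as [y'' [Hy'' Hsh]]. exists y''. split; auto.
    intros k. rewrite <- He. rewrite <- Hsh. unfold shift. f_equal.
Qed.

Lemma occurs_iter {A} (u : list A) n y c : occurs_at u (Nat.iter n (@shift A) y) c <-> occurs_at u y (n + c).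
Proof.
  unfold occurs_at. split; intros H k Hk; rewrite H by auto.
  - rewrite iter_shift. f_equal. f_equal. lia.
  - rewrite iter_shift. f_equal. f_equal. lia.
Qed.

Lemma lang_point {A} (X : (nat -> A) -> Prop) u : subshift X -> lang X u ->
  exists y, X y /\ occurs_at u y 0.
Proof.
  intros HX [_ [x [i [Hx Ho]]]]. exists (Nat.iter i (@shift A) x). split.
  apply iter_shift_X; auto. apply occurs_iter. rewrite Nat.add_0_r. auto.
Qed.

Lemma lang_point_at {A} (X : (nat -> A) -> Prop) u T : subshift X -> lang X u ->
  exists y, X y /\ occurs_at u y T.
Proof.
  intros HX Hl. destruct (lang_point HX Hl) as [y [Hy Ho]].
  destruct (@preimage_T _ X T y HX Hy) as [y' [Hy' He]]. exists y'. split; auto.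
  intros k Hk. rewrite He. rewrite Ho by auto. f_equal.
Qed.

Definition cyl {A} (X : (nat -> A) -> Prop) (u : list A) (c : nat) : (nat -> A) -> Prop :=
  fun y => X y /\ occurs_at u y c.

Lemma cyl_open {A} (X : (nat -> A) -> Prop) u c : rel_open X (cyl X u c).
Proof.
  split. intros x [H _]; auto.
  intros x [Hx Ho]. exists (c + length u)%nat. intros y Hy Hag. split; auto.
  intros k Hk. rewrite Ho by auto. f_equal. apply Hag. lia.
Qed.

Lemma lang_of_point {A} (X : (nat -> A) -> Prop) u y c : X y -> occurs_at u y c -> u <> [] -> lang X u.
Proof. intros. split; auto. exists y, c. auto. Qed.

Lemma word_of_nonnil {A} (y : nat -> A) c L : (1 <= L)%nat -> word_of y c L <> [].
Proof. intros H E. apply (f_equal (@length A)) in E. rewrite length_word_of in E. simpl in E. lia. Qed.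

Lemma no_long_run {A} X (w : list A) q z0 Rl :
  subshift X -> transitive X -> qperiodic w q -> (1 <= q)%nat -> (2*q <= length w)%nat ->
  exit_shape w q z0 -> lang X z0 ->
  (forall z, exit_shape w q z -> lang X z -> (length z <= Rl)%nat) ->
  ~ lang X (qpow w q (Rl + 2)).
Proof.
  intros HX Htr Hp Hq Hn Hz0 Hz0l Hbound HP.
  set (P := qpow w q (Rl + 2)) in *.
  assert (HPl : length P = ((Rl+1)*q + length w)%nat) by (unfold P; rewrite length_qpow by lia; f_equal; f_equal; lia).
  set (Pl := length P) in *.
  assert (HqP : forall k j, (k < Pl)%nat -> (j < Pl)%nat -> cong q k j -> nth_error P k = nth_error P j).
  { intros k j Hk Hj Hc. apply qpow_cong2; auto; lia. }
  destruct (lang_point HX Hz0l) as [y00 [Hy00 Ho00]].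
  destruct (lang_point HX HP) as [yP [HyP HoP]].
  destruct (Htr (cyl X z0 0) (cyl X P 0) (cyl_open X z0 0) (cyl_open X P 0)
              (ex_intro _ y00 (conj Hy00 Ho00)) (ex_intro _ yP (conj HyP HoP)))
    as [n0 [y0 [[Hy0 Hoz] [_ HoP0]]]].
  apply occurs_iter in HoP0. rewrite Nat.add_0_r in HoP0.
  assert (Hlb0 := exit_left_break Hp Hq Hn Hz0 Hoz). simpl in Hlb0.
  set (T := (n0 + Pl)%nat).
  destruct (lang_point_at T HX Hz0l) as [yT [HyT HoT]].
  destruct (Htr (cyl X (word_of y0 0 T) 0) (cyl X z0 T) (cyl_open X _ 0) (cyl_open X z0 T)
              (ex_intro _ y0 (conj Hy0 (occurs_word_of y0 0 T))) (ex_intro _ yT (conj HyT HoT)))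
    as [n1 [y1 [[Hy1 Hou] [_ Hoz1]]]].
  apply (proj1 (occurs_iter z0 n1 y1 T)) in Hoz1.
  assert (Hag : forall k, (k < T)%nat -> y1 k = y0 k).
  { intros k Hk. assert (E := Hou k). rewrite length_word_of, nth_word_of in E by auto.
    specialize (E Hk). simpl in E. injection E. auto. }
  assert (HoP1 : occurs_at P y1 n0).
  { intros k Hk. rewrite HoP0 by auto. rewrite Hag; auto. unfold T. lia. }
  assert (Hn0 : (1 <= n0)%nat).
  { destruct n0; [|lia]. exfalso. apply Hlb0.
    assert (E1 := HoP0 0%nat ltac:(lia)). assert (E2 := HoP0 q ltac:(lia)).
    rewrite (HqP 0%nat q) in E1 by (try lia; exists 1%nat, 0%nat; lia). rewrite E1 in E2.
    injection E2. auto. }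
  assert (Hw1 : occurs_at w y1 n0).
  { assert (E := @occurs_qpow_w _ w q (Rl+2) y1 n0 0%nat Hp ltac:(lia) HoP1 ltac:(lia)).
    rewrite Nat.mul_0_l, Nat.add_0_r in E. auto. }
  assert (Hrb := exit_right_break Hp Hq Hn Hz0 Hoz1).
  assert (Hz0len : (1 <= length z0)%nat) by (destruct z0; [destruct Hz0l; congruence|simpl; lia]).
  assert (HL : exists k0, (k0 < n0)%nat /\ y1 k0 <> y1 (k0+q)%nat).
  { exists 0%nat. split; [lia|]. rewrite !Hag by (unfold T; lia). auto. }
  assert (HR : exists k1, (n0 + length w <= k1)%nat /\ y1 k1 <> y1 (k1-q)%nat).
  { exists (n1 + T + length z0 - 1)%nat. split; [unfold T; lia|]. exact Hrb. }
  destruct (run_exit Hp Hq Hn Hw1 HL HR) as [a [b [Ha [Hb [Hbb [Hmin Hsh]]]]]].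
  { assert (HbP : (n0 + Pl <= b)%nat).
    { destruct (Nat.lt_ge_cases b (n0 + Pl)); auto. exfalso. apply Hbb.
      assert (E1 := HoP1 (b - n0)%nat ltac:(lia)). assert (E2 := HoP1 (b - n0 - q)%nat ltac:(lia)).
      rewrite (HqP (b-n0)%nat (b - n0 - q)%nat) in E1 by (try lia; exists 0%nat, 1%nat; lia).
      rewrite E1 in E2. injection E2. intros E. replace (b - q)%nat with (n0 + (b - n0 - q))%nat by lia. rewrite <- E. f_equal. lia. }
    assert (Hzl : lang X (word_of y1 (a-1) (b-a+2))).
    { apply (lang_of_point X Hy1 (occurs_word_of y1 (a-1) (b-a+2))). apply word_of_nonnil. lia. }
    assert (Hle := Hbound _ Hsh Hzl). rewrite length_word_of in Hle. nia. }
Qed.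

Lemma cover {A} X (w : list A) q Rl x i :
  qperiodic w q -> (1 <= q)%nat -> (2*q <= length w)%nat -> ~ lang X (qpow w q (Rl + 2)) ->
  X x -> occurs_at w x i -> ((Rl+1)*q <= i)%nat ->
  exists z j, exit_shape w q z /\ lang X z /\ occurs_at z x j /\ (j <= i)%nat /\
     (i + length w <= j + length z)%nat.
Proof.
  intros Hp Hq Hn HnP Hx Ho Hi.
  assert (HPl : length (qpow w q (Rl+2)) = ((Rl+1)*q + length w)%nat) by (rewrite length_qpow by lia; f_equal; f_equal; lia).
  assert (HPne : qpow w q (Rl+2) <> []).
  { intro E. apply (f_equal (@length A)) in E. rewrite HPl in E. simpl in E. lia. }
  assert (HL : exists k0, (k0 < i)%nat /\ x k0 <> x (k0+q)%nat).
  { destruct (classic (exists k0, (i - (Rl+1)*q <= k0 < i)%nat /\ x k0 <> x (k0+q)%nat)) as [[k0 [Hk0 Hne]]|Hno].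
    - exists k0. split; auto. lia.
    - exfalso. apply HnP. apply (lang_of_point X Hx (c := (i - (Rl+1)*q)%nat)); auto.
      apply (occ_qpow_of_per (d := (i + length w)%nat) (i := i)); auto; try lia.
      + apply (per_from_w Hp Ho); auto; try lia.
        intros k Hk. apply NNPP. intro. apply Hno. exists k. split; auto.
      + exists (Rl+1)%nat, 0%nat. lia. }
  assert (HR : exists k1, (i + length w <= k1)%nat /\ x k1 <> x (k1-q)%nat).
  { destruct (classic (exists k1, (i + length w <= k1 < i + length w + (Rl+1)*q)%nat /\ x k1 <> x (k1-q)%nat)) as [[k1 [Hk1 Hne]]|Hno].
    - exists k1. split; auto. lia.
    - exfalso. apply HnP. apply (lang_of_point X Hx (c := i)); auto.
      apply (occ_qpow_of_per (d := (i + length w + (Rl+1)*q)%nat) (i := i)); auto; try lia.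
      + apply (per_from_w Hp Ho); auto; try lia.
        intros k Hk. apply NNPP. intro. apply Hno. exists k. split; auto.
      + apply cong_refl. }
  destruct (run_exit Hp Hq Hn Ho HL HR) as [a [b [Ha [Hb [Hbb [Hmin Hsh]]]]]].
  exists (word_of x (a-1) (b-a+2)), (a-1)%nat. split; auto. split.
  { apply (lang_of_point X Hx (occurs_word_of x (a-1) (b-a+2))). apply word_of_nonnil. lia. }
  split. apply occurs_word_of. rewrite length_word_of. split; lia.
Qed.

Fixpoint sumn (f : nat -> nat) (N : nat) : nat :=
  match N with O => O | S N' => (sumn f N' + f N')%nat end.

Fixpoint lsum {T} (l : list T) (f : T -> nat) : nat :=
  match l with [] => O | a :: l' => (f a + lsum l' f)%nat end.

Lemma sumn_le f g N : (forall k, (k < N)%nat -> (f k <= g k)%nat) -> (sumn f N <= sumn g N)%nat.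
Proof. induction N as [|N IHN]; simpl; intros H; auto. specialize (IHN (fun k Hk => H k ltac:(lia))). specialize (H N ltac:(lia)). lia. Qed.

Lemma sumn_add f g N : sumn (fun k => f k + g k)%nat N = (sumn f N + sumn g N)%nat.
Proof. induction N as [|N IHN]; simpl; [lia|]. rewrite IHN. lia. Qed.

Lemma sumn_scal c f N : sumn (fun k => c * f k)%nat N = (c * sumn f N)%nat.
Proof. induction N as [|N IHN]; simpl; [lia|]. rewrite IHN. lia. Qed.

Lemma sumn_swap (F : nat -> nat -> nat) N M :
  sumn (fun j => sumn (fun u => F j u) M) N = sumn (fun u => sumn (fun j => F j u) N) M.
Proof.
  induction N as [|N IHN]; simpl.
  - induction M as [|M IHM]; simpl; auto. rewrite <- IHM. auto.
  - rewrite IHN. rewrite <- sumn_add. reflexivity.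
Qed.

Lemma lsum_le {T} (l : list T) f g : (forall z, In z l -> (f z <= g z)%nat) -> (lsum l f <= lsum l g)%nat.
Proof. induction l as [|a l IHl]; simpl; intros Hf; auto.
  assert (H1 := IHl (fun z Hz => Hf z (or_intror Hz))). assert (H2 := Hf a (or_introl eq_refl)). lia. Qed.

Lemma lsum_in {T} (l : list T) f z : In z l -> (f z <= lsum l f)%nat.
Proof. induction l as [|a l IHl]; simpl; intros Hin; [contradiction|]. destruct Hin as [E|Hin]; [subst; lia|]. specialize (IHl Hin). lia. Qed.

Lemma lsum_sumn_swap {T} (l : list T) (F : T -> nat -> nat) M :
  sumn (fun u => lsum l (fun z => F z u)) M = lsum l (fun z => sumn (fun u => F z u) M).
Proof.
  induction l as [|a l IHl]; simpl.
  - induction M as [|M IHM]; simpl; auto. rewrite IHM. auto.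
  - rewrite sumn_add, IHl. reflexivity.
Qed.

Lemma sumn_in f N k : (k < N)%nat -> (f k <= sumn f N)%nat.
Proof. induction N as [|N IHN]; simpl; intros H; [lia|]. destruct (Nat.eq_dec k N); [subst; lia|]. specialize (IHN ltac:(lia)). lia. Qed.

Definition ind (P : Prop) : nat := if excluded_middle_informative P then 1%nat else 0%nat.

Lemma ind_le1 P : (ind P <= 1)%nat.
Proof. unfold ind. destruct excluded_middle_informative; lia. Qed.
Lemma ind_true P : P -> ind P = 1%nat.
Proof. unfold ind. destruct excluded_middle_informative; tauto. Qed.
Lemma ind_pos P : (1 <= ind P)%nat -> P.
Proof. unfold ind. destruct excluded_middle_informative; auto. lia. Qed.

Definition intv (al C u : nat) : nat := if ((al <=? u) && (u <? al + C))%bool then 1%nat else 0%nat.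

Lemma sumn_intv al C M : sumn (intv al C) M = (Nat.min M (al + C) - Nat.min M al)%nat.
Proof.
  induction M as [|M IHM]; cbn [sumn]; [lia|]. rewrite IHM. unfold intv.
  destruct (Nat.leb_spec al M); destruct (Nat.ltb_spec M (al+C)); cbn [andb]; lia.
Qed.

Lemma intv_spec al C u : (al <= u < al + C)%nat -> intv al C u = 1%nat.
Proof. intros H. unfold intv. destruct (Nat.leb_spec al u); destruct (Nat.ltb_spec u (al+C)); cbn [andb]; lia. Qed.
Lemma intv_le1 al C u : (intv al C u <= 1)%nat.
Proof. unfold intv. destruct (_ && _)%bool; lia. Qed.

Lemma div_bounds a L : (1 <= L)%nat -> (L * (a / L) <= a < L * (a / L) + L)%nat.
Proof. intros H. pose proof (Nat.div_mod_eq a L). pose proof (Nat.mod_upper_bound a L ltac:(lia)). lia. Qed.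

Lemma div_between a L u : (u * L <= a < (u+1) * L)%nat -> a / L = u.
Proof.
  intros H. assert (1 <= L)%nat by nia. pose proof (div_bounds a H0).
  set (d := (a / L)%nat) in *.
  destruct (Nat.lt_trichotomy d u) as [Hl|[He|Hg]]; auto.
  - assert (d + 1 <= u)%nat by lia. assert ((d+1)*L <= u * L)%nat by (apply Nat.mul_le_mono_r; auto). nia.
  - assert (u + 1 <= d)%nat by lia. assert ((u+1)*L <= d * L)%nat by (apply Nat.mul_le_mono_r; auto). nia.
Qed.

Lemma ceil_mult D q : (1 <= q)%nat -> exists t, (D <= t * q < D + q)%nat.
Proof.
  intros Hq. exists ((D + q - 1) / q)%nat. pose proof (div_bounds (D + q - 1) Hq). nia.
Qed.

Lemma r_le1 {A} K (v : list A) x j : (r K v x j <= 1)%nat.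
Proof. unfold r. destruct (ClassicalDescription.excluded_middle_informative _); lia. Qed.

Lemma rsum_sumn {A} K (v : list A) x N : rsum K v x N = sumn (fun j => r K v x (S j)) N.
Proof. induction N as [|N IHN]; simpl; auto. Qed.

Lemma rsum_le {A} K (v : list A) x N : (rsum K v x N <= N)%nat.
Proof. induction N as [|N IHN]; simpl; auto. pose proof (r_le1 K v x (S N)). lia. Qed.

Lemma r_hit {A} K (v : list A) x i : (1 <= length v)%nat -> occurs_at v x i ->
  r K v x (S (i / ((K+1) * length v))) = 1%nat.
Proof.
  intros Hv Ho. unfold r. destruct (ClassicalDescription.excluded_middle_informative _) as [_|Hn]; auto. exfalso. apply Hn.
  set (L := ((K+1) * length v)%nat). assert (HL : (1 <= L)%nat) by (unfold L; nia).
  pose proof (div_bounds i HL). exists (S i). simpl. rewrite Nat.sub_0_r.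
  set (d := (i / L)%nat) in *. unfold L in *. split; [nia|]. split; [nia|]. rewrite Nat.sub_0_r. auto.
Qed.

Lemma r_elim {A} K (v : list A) x j : r K v x (S j) = 1%nat ->
  exists i, (j * ((K+1) * length v) <= i < S j * ((K+1) * length v))%nat /\ occurs_at v x i.
Proof.
  unfold r. destruct (ClassicalDescription.excluded_middle_informative _) as [[k [H1 [H2 H3]]]|_]; [|lia]. intros _.
  exists (k-1)%nat. simpl in H1. rewrite Nat.sub_0_r in H1. split; auto. nia.
Qed.

Lemma sumn_zero f N : (forall k, (k < N)%nat -> f k = 0%nat) -> sumn f N = 0%nat.
Proof. induction N as [|N IHN]; simpl; intros H; auto. rewrite IHN, H; auto. Qed.

Lemma count1 {A} K (w z : list A) q x lp rr N :
  (2 <= length w)%nat -> (1 <= q <= length w)%nat -> (1 <= rr)%nat ->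
  (lp + (rr-1)*q + length w + 1 <= length z)%nat ->
  (forall c, occurs_at z x c -> forall t, (t < rr)%nat -> occurs_at w x (c + lp + t*q)) ->
  let Lw := ((K+1) * length w)%nat in let Lz := ((K+1) * length z)%nat in
  let H := (1 + ((rr-1)*q) / Lw)%nat in
  (H * rsum K z x N <= 2 * rsum K w x ((N * Lz + length z) / Lw + H + 1))%nat.
Proof.
  intros Hn Hq Hr Hm Hocc Lw Lz H.
  set (n := length w) in *. set (m := length z) in *.
  set (M := ((N * Lz + m) / Lw + H + 1)%nat).
  assert (HLw : (1 <= Lw)%nat) by (unfold Lw; (timeout 10 nia)).
  assert (HLz : (Lw + m - n <= Lz)%nat) by (unfold Lw, Lz; (timeout 10 nia)).
  assert (HqL : (q <= Lw)%nat) by (unfold Lw; (timeout 10 nia)).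
  set (F := fun j u => ind (exists i t, (j * Lz <= i < S j * Lz)%nat /\ occurs_at z x i /\ (t < rr)%nat /\
                                        ((i + lp + t*q) / Lw)%nat = u)).
  assert (SA : forall j, (j < N)%nat -> (H * r K z x (S j) <= sumn (F j) M)%nat).
  { intros j Hj. pose proof (r_le1 K z x (S j)).
    destruct (Nat.eq_dec (r K z x (S j)) 1%nat) as [E|E]; [|(timeout 10 nia)].
    rewrite E. destruct (r_elim _ _ _ _ E) as [i [Hi Hoi]]. fold m Lz in Hi.
    set (f := ((i + lp) / Lw)%nat).
    assert (Hf : (f + H <= M)%nat).
    { unfold M. assert (f <= (N * Lz + m) / Lw)%nat; [|lia].
      apply Nat.Div0.div_le_mono. (timeout 10 nia). }
    apply Nat.le_trans with (sumn (intv f H) M).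
    { rewrite sumn_intv. lia. }
    apply sumn_le. intros u Hu. unfold intv.
    destruct (Nat.leb_spec f u); destruct (Nat.ltb_spec u (f+H)); cbn [andb]; try lia.
    unfold F. rewrite ind_true; auto.
    pose proof (div_bounds (i + lp) HLw) as Hdb1. fold f in Hdb1.
    pose proof (div_bounds ((rr-1)*q) HLw) as Hdb2.
    assert (Hd : ((u - f) * Lw <= (rr-1)*q)%nat).
    { assert (u - f <= (rr-1)*q/Lw)%nat by (unfold H in *; lia).
      assert (Hm1 : ((u - f) * Lw <= ((rr-1)*q/Lw) * Lw)%nat) by (apply Nat.mul_le_mono_r; auto).
      rewrite (Nat.mul_comm ((rr-1)*q/Lw)) in Hm1. lia. }
    destruct (Nat.eq_dec u f) as [Eu|Eu].
    - exists i, 0%nat. split; auto. split; auto. split; [lia|]. rewrite Nat.mul_0_l, Nat.add_0_r. auto.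
    - destruct (@ceil_mult (u * Lw - (i + lp))%nat q ltac:(lia)) as [t Ht].
      exists i, t.
      assert (E1 : ((u - f) * Lw = u * Lw - f * Lw)%nat) by apply Nat.mul_sub_distr_r.
      assert (E2 : (rr * q = (rr - 1) * q + q)%nat) by (destruct rr; [lia|]; simpl; rewrite Nat.sub_0_r; lia).
      assert (E3 : ((f+1) * Lw <= u * Lw)%nat) by (apply Nat.mul_le_mono_r; lia).
      assert (E4 : ((f+1) * Lw = f * Lw + Lw)%nat) by lia.
      assert (E5 : ((u+1) * Lw = u * Lw + Lw)%nat) by lia.
      rewrite (Nat.mul_comm Lw f) in Hdb1.
      split; auto. split; auto. split.
      + assert (t * q < rr * q)%nat by lia.
        destruct (Nat.lt_ge_cases t rr); auto. assert (rr * q <= t * q)%nat by (apply Nat.mul_le_mono_r; lia). lia.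
      + apply div_between. lia. }
  assert (SB : forall u, (u < M)%nat -> (sumn (fun j => F j u) N <= 2 * r K w x (S u))%nat).
  { intros u Hu.
    destruct (classic (exists j, (0 <= j)%nat /\ (j < N)%nat /\ (1 <= F j u)%nat)) as [Hex|Hno].
    - destruct (@min_above (fun j => (j < N)%nat /\ (1 <= F j u)%nat) 0%nat) as [j0 [_ [[Hj0 HF0] Hmin]]].
      { destruct Hex as [j [_ Hj]]. exists j. split; [lia|]. auto. }
      unfold F in HF0. apply ind_pos in HF0. destruct HF0 as [i0 [t0 [Hi0 [Ho0 [Ht0 Hu0]]]]].
      assert (Hw := Hocc i0 Ho0 t0 Ht0).
      assert (Hr1 : r K w x (S u) = 1%nat).
      { rewrite <- Hu0. apply r_hit; auto. lia. }
      rewrite Hr1. apply Nat.le_trans with (sumn (intv j0 2) N).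
      2:{ rewrite sumn_intv. lia. }
      apply sumn_le. intros j Hj. unfold F.
      destruct (classic (exists i t, (j * Lz <= i < S j * Lz)%nat /\ occurs_at z x i /\ (t < rr)%nat /\
                                        ((i + lp + t*q) / Lw)%nat = u)) as [Hj'|Hj'].
      + rewrite ind_true by auto. destruct Hj' as [i [t [Hi [Hoi [Ht Hui]]]]].
        rewrite intv_spec; auto. split.
        * destruct (Nat.lt_ge_cases j j0); [|lia]. exfalso. apply (Hmin j); [lia|].
          split; auto. unfold F. rewrite ind_true; auto. exists i, t. auto.
        * pose proof (div_bounds (i + lp + t*q) HLw). rewrite Hui in H0.
          pose proof (div_bounds (i0 + lp + t0*q) HLw). rewrite Hu0 in H1.
          assert (t0 * q <= (rr-1)*q)%nat by (apply Nat.mul_le_mono_r; lia).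
          assert (j * Lz < (j0 + 2) * Lz)%nat by (timeout 10 nia).
          destruct (Nat.lt_ge_cases j (j0+2)); auto. assert ((j0+2)*Lz <= j * Lz)%nat by (apply Nat.mul_le_mono_r; lia). lia.
      + unfold ind. destruct excluded_middle_informative; [contradiction|]. lia.
    - rewrite sumn_zero; [lia|]. intros j Hj. pose proof (ind_le1 (exists i t, (j * Lz <= i < S j * Lz)%nat /\ occurs_at z x i /\ (t < rr)%nat /\
                                        ((i + lp + t*q) / Lw)%nat = u)).
      fold (F j u) in H0. destruct (Nat.eq_dec (F j u) 0%nat); auto. exfalso. apply Hno. exists j. split; [lia|]. split; auto. lia. }
  rewrite !rsum_sumn, <- !sumn_scal.
  apply Nat.le_trans with (sumn (fun j => sumn (F j) M) N).
  { apply sumn_le. auto. }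
  apply Nat.le_trans with (sumn (fun u => sumn (fun j => F j u) N) M).
  { rewrite <- sumn_swap. apply Nat.eq_le_incl. reflexivity. }
  apply sumn_le. auto.
Qed.

Definition Cz {A} K (w z : list A) : nat :=
  (((K+1) * length z + length z - length w) / ((K+1) * length w) + 2)%nat.
Definition Nz {A} K (w z : list A) (M : nat) : nat :=
  (M * ((K+1) * length w) / ((K+1) * length z) + 1)%nat.

Lemma count2 {A} X K (w : list A) q Rl x (l : list (list A)) M :
  qperiodic w q -> (1 <= q)%nat -> (2*q <= length w)%nat -> ~ lang X (qpow w q (Rl + 2)) -> X x ->
  (forall z, exit_shape w q z -> lang X z -> In z l) ->
  (forall z, In z l -> (length w <= length z)%nat) ->
  (rsum K w x M <= (Rl+1)*q + lsum l (fun z => Cz K w z * rsum K z x (Nz K w z M)))%nat.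
Proof.
  intros Hp Hq Hn HnP Hx Hl Hlen.
  set (n := length w) in *. set (Lw := ((K+1) * n)%nat).
  assert (HLw : (1 <= Lw)%nat) by (unfold Lw; nia).
  set (u0 := ((Rl+1)*q)%nat).
  set (G := fun (z : list A) v u => ind (exists j i, (v * ((K+1) * length z) <= j < S v * ((K+1) * length z))%nat /\
      occurs_at z x j /\ occurs_at w x i /\ (j <= i)%nat /\ (i + n <= j + length z)%nat /\ (i / Lw)%nat = u)).
  assert (SC : forall u, (u < M)%nat -> (r K w x (S u) <= intv 0 u0 u + lsum l (fun z => sumn (fun v => G z v u) (Nz K w z M)))%nat).
  { intros u Hu. destruct (Nat.lt_ge_cases u u0).
    - rewrite intv_spec by lia. pose proof (r_le1 K w x (S u)). lia.
    - pose proof (r_le1 K w x (S u)).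
      destruct (Nat.eq_dec (r K w x (S u)) 1%nat) as [E|E]; [|lia]. rewrite E.
      destruct (r_elim _ _ _ _ E) as [i [Hi Hoi]]. fold n Lw in Hi.
      assert (Hui : (u <= u * Lw)%nat) by nia.
      destruct (cover Rl Hp Hq Hn HnP Hx Hoi ltac:(unfold u0 in *; lia)) as [z [j [Hz [Hzl [Hoz [Hji Hij]]]]]].
      assert (Hin := Hl z Hz Hzl).
      assert (Hlz := Hlen z Hin).
      set (Lz := ((K+1) * length z)%nat) in *.
      assert (HLz : (1 <= Lz)%nat) by (unfold Lz; nia).
      set (v := (j / Lz)%nat).
      pose proof (div_bounds j HLz) as Hdj. fold v in Hdj.
      assert (HG : G z v u = 1%nat).
      { unfold G. apply ind_true. exists j, i. split; [split; nia|]. split; auto. split; auto. split; auto. split; auto.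
        apply div_between. nia. }
      assert (Hv : (v < Nz K w z M)%nat).
      { unfold Nz. fold n Lw Lz. assert (v <= M * Lw / Lz)%nat; [|lia].
        apply Nat.Div0.div_le_mono. assert (S u * Lw <= M * Lw)%nat by (apply Nat.mul_le_mono_r; lia). lia. }
      assert (H1 := sumn_in (fun v => G z v u) Hv). simpl in H1. rewrite HG in H1.
      assert (H2 := @lsum_in _ l (fun z => sumn (fun v => G z v u) (Nz K w z M)) z Hin). simpl in H2. lia. }
  assert (SD : forall z, In z l -> forall v, (sumn (fun u => G z v u) M <= Cz K w z * r K z x (S v))%nat).
  { intros z Hin v. assert (Hlz := Hlen z Hin).
    set (Lz := ((K+1) * length z)%nat) in *.
    assert (HLz : (1 <= Lz)%nat) by (unfold Lz; nia).
    destruct (classic (exists u, (u < M)%nat /\ (1 <= G z v u)%nat)) as [[u0' [Hu0 HG0]]|Hno].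
    - unfold G in HG0. apply ind_pos in HG0. destruct HG0 as [j0 [i0 [Hj0 [Hoz0 _]]]].
      assert (Hrz : r K z x (S v) = 1%nat).
      { replace v with (j0 / Lz)%nat. apply r_hit; auto. lia. apply div_between. fold Lz in Hj0. nia. }
      rewrite Hrz, Nat.mul_1_r.
      set (al := (v * Lz / Lw)%nat).
      apply Nat.le_trans with (sumn (intv al (Cz K w z)) M).
      2:{ rewrite sumn_intv. lia. }
      apply sumn_le. intros u Hu. unfold G.
      destruct (classic (exists j i, (v * ((K+1) * length z) <= j < S v * ((K+1) * length z))%nat /\
         occurs_at z x j /\ occurs_at w x i /\ (j <= i)%nat /\ (i + n <= j + length z)%nat /\ (i / Lw)%nat = u)) as [Hc|Hc].
      + rewrite ind_true by auto. destruct Hc as [j [i [Hj [_ [_ [Hji [Hij Hiu]]]]]]]. fold Lz in Hj.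
        rewrite intv_spec; auto. split.
        * rewrite <- Hiu. unfold al. apply Nat.Div0.div_le_mono. lia.
        * set (b := (Lz + length z - n)%nat).
          assert (HCz : Cz K w z = (b / Lw + 2)%nat) by reflexivity.
          pose proof (div_bounds (v * Lz) HLw) as D1. fold al in D1.
          pose proof (div_bounds b HLw) as D2.
          pose proof (div_bounds i HLw) as D3. rewrite Hiu in D3.
          assert (Hib : (i < v * Lz + b)%nat) by (unfold b; lia).
          rewrite HCz. destruct (Nat.lt_ge_cases u (al + (b / Lw + 2))); auto.
          assert (Lw * (al + (b / Lw + 2)) <= Lw * u)%nat by (apply Nat.mul_le_mono_l; auto).
          rewrite !Nat.mul_add_distr_l in H0. lia.
      + unfold ind. destruct excluded_middle_informative; [contradiction|]. lia.
    - rewrite sumn_zero; [lia|]. intros u Hu. pose proof (ind_le1 (exists j i, (v * ((K+1) * length z) <= j < S v * ((K+1) * length z))%nat /\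
         occurs_at z x j /\ occurs_at w x i /\ (j <= i)%nat /\ (i + n <= j + length z)%nat /\ (i / Lw)%nat = u)).
      fold (G z v u) in H. destruct (Nat.eq_dec (G z v u) 0%nat); auto. exfalso. apply Hno. exists u. split; auto. lia. }
  rewrite rsum_sumn.
  apply Nat.le_trans with (sumn (fun u => intv 0 u0 u + lsum l (fun z => sumn (fun v => G z v u) (Nz K w z M)))%nat M).
  { apply sumn_le. auto. }
  rewrite sumn_add. apply Nat.add_le_mono.
  { rewrite sumn_intv. lia. }
  rewrite lsum_sumn_swap. apply lsum_le. intros z Hz.
  apply Nat.le_trans with (sumn (fun v => sumn (fun u => G z v u) M) (Nz K w z M)).
  { apply Nat.eq_le_incl. symmetry. apply (sumn_swap (G z)). }
  rewrite rsum_sumn, <- sumn_scal. apply sumn_le. intros v _. apply SD; auto.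
Qed.

Open Scope R_scope.

Lemma limsup_exists (u : nat -> R) : (forall n, 0 <= u n <= 1) -> exists l, is_limsup u l.
Proof.
  intros Hb. destruct (Lim_seq.ex_LimSup_seq u) as [l Hl].
  destruct l as [l| |]; simpl in Hl.
  - exists l. split.
    + intros eps He. destruct (Hl (mkposreal eps He)) as [_ H2]. exact H2.
    + intros eps He. destruct (Hl (mkposreal eps He)) as [H1 _]. exact H1.
  - exfalso. destruct (Hl 2 0%nat) as [n [_ Hn]]. specialize (Hb n). lra.
  - exfalso. destruct (Hl (-1)) as [N HN]. specialize (HN N (le_n N)). specialize (Hb N). lra.
Qed.

Lemma limsup_spec (u : nat -> R) : (forall n, 0 <= u n <= 1) -> is_limsup u (limsup u).
Proof.
  intros Hb. unfold limsup. apply epsilon_spec. apply limsup_exists; auto.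
Qed.

Lemma limsup_bounds (u : nat -> R) l : (forall n, 0 <= u n <= 1) -> is_limsup u l -> 0 <= l <= 1.
Proof.
  intros Hb [H1 H2]. split.
  - destruct (Rle_lt_dec 0 l); auto. destruct (H1 (-l/2) ltac:(lra)) as [N HN].
    specialize (HN N (le_n N)). specialize (Hb N). lra.
  - destruct (Rle_lt_dec l 1); auto. destruct (H2 ((l-1)/2) ltac:(lra) 0%nat) as [n [_ Hn]].
    specialize (Hb n). lra.
Qed.

Lemma Rdiv_le_0_compat a b : 0 <= a -> 0 < b -> 0 <= a / b.
Proof. intros. unfold Rdiv. apply Rmult_le_pos; auto. left. apply Rinv_0_lt_compat; auto. Qed.

Lemma avg_bounds {A} K (v : list A) x N : 0 <= avg K v x N <= 1.
Proof.
  unfold avg. pose proof (rsum_le K v x N). destruct N.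
  - simpl. unfold Rdiv. rewrite Rmult_0_l. lra.
  - assert (0 < INR (S N)) by (apply lt_0_INR; lia).
    apply le_INR in H. split.
    + apply Rdiv_le_0_compat; auto. apply pos_INR.
    + apply Rmult_le_reg_r with (INR (S N)); auto. unfold Rdiv. rewrite Rmult_assoc, Rinv_l by lra. lra.
Qed.

Lemma Dens_spec {A} K (v : list A) x : is_limsup (avg K v x) (Dens K v x) /\ 0 <= Dens K v x <= 1.
Proof.
  assert (Hb := avg_bounds K v x). split.
  - apply limsup_spec; auto.
  - apply (limsup_bounds Hb). apply limsup_spec; auto.
Qed.

Lemma avg_mult {A} K (v : list A) x N : (1 <= N)%nat -> avg K v x N * INR N = INR (rsum K v x N).
Proof. intros H. unfold avg. field. apply not_0_INR. lia. Qed.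

Lemma le_of_eps a b c : 0 <= c -> (forall eps, 0 < eps <= 1 -> a >= b - eps * c) -> a >= b.
Proof.
  intros Hc H. destruct (Rge_dec a b) as [|Hn]; auto. exfalso.
  set (e := Rmin 1 ((b - a) / (2 * (c + 1)))).
  assert (He1 : 0 < e). { unfold e. apply Rmin_pos; [lra|]. apply Rdiv_lt_0_compat; lra. }
  assert (He2 : e <= 1) by apply Rmin_l.
  assert (He3 : e <= (b - a) / (2 * (c+1))) by apply Rmin_r.
  specialize (H e (conj He1 He2)).
  assert (e * (2 * (c+1)) <= b - a).
  { apply Rmult_le_reg_r with (/ (2 * (c+1))). apply Rinv_0_lt_compat; lra.
    rewrite Rmult_assoc, Rinv_r by lra. lra. }
  nra.
Qed.

Lemma compare1 {A} K (w z : list A) x (H Lw Lz C : nat) (Mf : nat -> nat) :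
  (1 <= Lw)%nat -> (1 <= Lz)%nat -> (1 <= H)%nat ->
  (forall N, (H * rsum K z x N <= 2 * rsum K w x (Mf N))%nat) ->
  (forall N, (Mf N * Lw <= N * Lz + C)%nat) -> (forall N, (N <= Mf N)%nat) ->
  Dens K w x >= INR H * INR Lw / (2 * INR Lz) * Dens K z x.
Proof.
  intros HLw HLz HH Hcount HMf HMN.
  destruct (Dens_spec K w x) as [[Hw1 Hw2] Hwb]. destruct (Dens_spec K z x) as [[Hz1 Hz2] Hzb].
  set (Dw := Dens K w x) in *. set (Dz := Dens K z x) in *.
  assert (RLw : 1 <= INR Lw) by (apply (le_INR 1); auto).
  assert (RLz : 1 <= INR Lz) by (apply (le_INR 1); auto).
  assert (RH : 1 <= INR H) by (apply (le_INR 1); auto).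
  set (g := INR H * INR Lw / (2 * INR Lz)).
  assert (Hg : 0 <= g) by (unfold g; apply Rdiv_le_0_compat; nra).
  apply (le_of_eps (c := g + 3)); [lra|]. intros eps [He1 He2].
  destruct (Hw1 eps He1) as [N0 HN0].
  destruct (Rle_lt_dec Dz eps) as [Hsmall|Hbig].
  { assert (g * Dz <= g * eps) by (apply Rmult_le_compat_l; lra). nra. }
  destruct (INR_unbounded (INR C / (eps * INR Lz))) as [Nb HNb].
  destruct (Hz2 eps He1 (Nat.max N0 (Nat.max 1 Nb))) as [N [HN HzN]].
  assert (HN1 : (1 <= N)%nat) by lia.
  assert (RN : 1 <= INR N) by (apply (le_INR 1); auto).
  assert (HCN : INR C <= eps * INR Lz * INR N).
  { assert (INR Nb <= INR N) by (apply le_INR; lia).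
    assert (INR C / (eps * INR Lz) < INR N) by lra.
    apply Rmult_lt_compat_r with (r := eps * INR Lz) in H1; [|nra].
    unfold Rdiv in H1. rewrite Rmult_assoc, Rinv_l in H1 by nra. lra. }
  set (M := Mf N).
  assert (HM1 : (N0 <= M)%nat) by (specialize (HMN N); unfold M; lia).
  assert (HM2 : (1 <= M)%nat) by (specialize (HMN N); unfold M; lia).
  specialize (HN0 M HM1).
  assert (RM : 1 <= INR M) by (apply (le_INR 1); auto).
  assert (E1 := avg_mult K w x HM2). assert (E2 := avg_mult K z x HN1).
  assert (Hc : INR H * INR (rsum K z x N) <= 2 * INR (rsum K w x M)).
  { rewrite <- mult_INR. replace 2 with (INR 2) by reflexivity. rewrite <- mult_INR. apply le_INR. apply Hcount. }
  assert (HMr : INR M * INR Lw <= INR N * INR Lz + INR C).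
  { rewrite <- !mult_INR, <- plus_INR. apply le_INR. apply HMf. }
  assert (X1 : (Dz - eps) * INR N < INR (rsum K z x N)) by (rewrite <- E2; nra).
  assert (X2 : INR (rsum K w x M) < (Dw + eps) * INR M) by (rewrite <- E1; nra).
  assert (X3 : INR H * (Dz - eps) * INR N < 2 * (Dw + eps) * INR M) by nra.
  assert (X4 : INR H * (Dz - eps) * INR N * INR Lw < 2 * (Dw + eps) * (INR N * INR Lz * (1 + eps))).
  { assert (INR M * INR Lw <= INR N * INR Lz * (1 + eps)) by nra.
    assert (0 < Dw + eps) by lra. nra. }
  assert (X5 : INR H * (Dz - eps) * INR Lw < 2 * (Dw + eps) * INR Lz * (1 + eps)).
  { apply Rmult_lt_reg_r with (INR N); [lra|]. nra. }
  assert (X6 : g * (Dz - eps) < (Dw + eps) * (1 + eps)).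
  { unfold g. apply Rmult_lt_reg_r with (2 * INR Lz); [lra|].
    unfold Rdiv. replace (INR H * INR Lw * / (2 * INR Lz) * (Dz - eps) * (2 * INR Lz))
      with (INR H * (Dz - eps) * INR Lw) by (field; lra). nra. }
  nra.
Qed.

Lemma ev_list {T} (l : list T) (P : T -> nat -> Prop) :
  (forall z, In z l -> exists M0, forall M, (M0 <= M)%nat -> P z M) ->
  exists M0, forall M, (M0 <= M)%nat -> forall z, In z l -> P z M.
Proof.
  induction l as [|a l IH]; intros H.
  - exists 0%nat. intros M _ z [].
  - destruct (H a (or_introl eq_refl)) as [Ma Ha].
    destruct IH as [Ml Hl]. { intros z Hz. apply H. right; auto. }
    exists (Nat.max Ma Ml). intros M HM z [E|Hz].
    + subst. apply Ha. lia.
    + apply Hl; auto. lia.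
Qed.

Lemma lsum_INR_bound {T} (l : list T) f B : (forall z, In z l -> INR (f z) <= B) ->
  INR (lsum l f) <= INR (length l) * B.
Proof.
  induction l as [|a l IH]; intros H; simpl.
  - lra.
  - rewrite plus_INR. assert (H1 := H a (or_introl eq_refl)).
    assert (H2 := IH (fun z Hz => H z (or_intror Hz))).
    destruct (length l); simpl in *; lra.
Qed.

Lemma compare2 {A} K (w : list A) x (l : list (list A)) (u0 : nat) (Cf : list A -> nat)
  (Nf : list A -> nat -> nat) Dstar :
  (forall M, (rsum K w x M <= u0 + lsum l (fun z => Cf z * rsum K z x (Nf z M)))%nat) ->
  (forall z M, In z l -> (Cf z * Nf z M <= 3*M + Cf z)%nat) ->
  (forall z N0, In z l -> exists M0, forall M, (M0 <= M)%nat -> (N0 <= Nf z M)%nat) ->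
  (forall z M, In z l -> (1 <= Nf z M)%nat) ->
  (forall z, In z l -> Dens K z x <= Dstar) -> 0 <= Dstar <= 1 ->
  3 * INR (length l) * Dstar >= Dens K w x.
Proof.
  intros Hcount HCN HNinf HN1 HD HDs.
  destruct (Dens_spec K w x) as [[Hw1 Hw2] Hwb].
  set (Dw := Dens K w x) in *. set (nl := INR (length l)).
  assert (Hnl : 0 <= nl) by apply pos_INR.
  set (Ctot := lsum l Cf).
  apply (le_of_eps (c := 2 + 3 * nl)); [lra|]. intros eps [He1 He2].
  assert (HP : forall z, In z l -> exists M0, forall M, (M0 <= M)%nat ->
             INR (Cf z * rsum K z x (Nf z M)) <= (Dstar + eps) * (3 * INR M + INR Ctot)).
  { intros z Hz. destruct (Dens_spec K z x) as [[Hz1 Hz2] Hzb].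
    destruct (Hz1 eps He1) as [N0 HN0]. destruct (HNinf z N0 Hz) as [M0 HM0].
    exists M0. intros M HM.
    assert (HNz := HN1 z M Hz). specialize (HN0 (Nf z M) (HM0 M HM)).
    assert (E := avg_mult K z x HNz).
    assert (RN : 1 <= INR (Nf z M)) by (apply (le_INR 1); auto).
    assert (Hr : INR (rsum K z x (Nf z M)) <= (Dstar + eps) * INR (Nf z M)).
    { rewrite <- E. assert (Dens K z x <= Dstar) by auto. nra. }
    assert (HC1 : INR (Cf z) * INR (Nf z M) <= 3 * INR M + INR (Cf z)).
    { rewrite <- mult_INR. replace 3 with (INR 3) by (simpl; lra). rewrite <- mult_INR, <- plus_INR. apply le_INR. auto. }
    assert (HC2 : INR (Cf z) <= INR Ctot) by (apply le_INR; apply lsum_in; auto).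
    rewrite mult_INR. assert (0 <= INR (Cf z)) by apply pos_INR.
    assert (INR (Cf z) * INR (rsum K z x (Nf z M)) <= (Dstar + eps) * (INR (Cf z) * INR (Nf z M))) by nra.
    nra. }
  destruct (@ev_list _ l (fun z M => INR (Cf z * rsum K z x (Nf z M)) <= (Dstar + eps) * (3 * INR M + INR Ctot)) HP) as [M0 HM0].
  assert (Hctot : 0 <= INR Ctot) by apply pos_INR.
  destruct (INR_unbounded ((INR u0 + 2 * nl * INR Ctot) / eps)) as [Mb HMb].
  destruct (Hw2 eps He1 (Nat.max M0 (Nat.max 1 Mb))) as [M [HM HwM]].
  assert (HM1 : (1 <= M)%nat) by lia.
  assert (RM : 1 <= INR M) by (apply (le_INR 1); auto).
  assert (HMb' : INR u0 + 2 * nl * INR Ctot <= eps * INR M).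
  { assert (INR Mb <= INR M) by (apply le_INR; lia).
    assert ((INR u0 + 2 * nl * INR Ctot) / eps < INR M) by lra.
    apply Rmult_lt_compat_r with (r := eps) in H0; [|lra].
    unfold Rdiv in H0. rewrite Rmult_assoc, Rinv_l in H0 by lra. lra. }
  assert (Hsum : INR (lsum l (fun z => (Cf z * rsum K z x (Nf z M))%nat)) <= nl * ((Dstar + eps) * (3 * INR M + INR Ctot))).
  { apply lsum_INR_bound. intros z Hz. apply (HM0 M); auto. lia. }
  assert (Hc : INR (rsum K w x M) <= INR u0 + nl * ((Dstar + eps) * (3 * INR M + INR Ctot))).
  { apply Rle_trans with (INR (u0 + lsum l (fun z => (Cf z * rsum K z x (Nf z M))%nat))%nat).
    apply le_INR. auto. rewrite plus_INR. lra. }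
  assert (E := avg_mult K w x HM1).
  assert (X1 : (Dw - eps) * INR M < INR (rsum K w x M)) by (rewrite <- E; nra).
  assert (X2 : nl * (Dstar + eps) * INR Ctot <= 2 * nl * INR Ctot).
  { assert (Dstar + eps <= 2) by lra. assert (0 <= nl * INR Ctot) by nra. nra. }
  assert (X3 : (Dw - eps) * INR M < eps * INR M + 3 * nl * (Dstar + eps) * INR M) by nra.
  assert (X4 : Dw - eps < eps + 3 * nl * (Dstar + eps)).
  { apply Rmult_lt_reg_r with (INR M); [lra|]. nra. }
  nra.
Qed.

Open Scope R_scope.

Lemma argmax_list {T} (l : list T) (f : T -> R) : l <> [] -> exists z', In z' l /\ forall z, In z l -> f z <= f z'.
Proof.
  induction l as [|a l IH]; intros Hne; [congruence|].
  destruct l as [|b l'].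
  - exists a. split; [left; auto|]. intros z [E|[]]; subst; lra.
  - destruct IH as [z' [Hz' Hmax]]; [discriminate|].
    destruct (Rle_lt_dec (f a) (f z')).
    + exists z'. split; [right; auto|]. intros z [E|Hz]; [subst; auto|]. auto.
    + exists a. split; [left; auto|]. intros z [E|Hz]; [subst; lra|]. specialize (Hmax z Hz). lra.
Qed.

Lemma CN_bound {A} K (w z : list A) M : (1 <= length w <= length z)%nat ->
  (Cz K w z * Nz K w z M <= 3*M + Cz K w z)%nat.
Proof.
  intros Hl. unfold Nz. set (Lw := ((K+1) * length w)%nat). set (Lz := ((K+1) * length z)%nat).
  assert (HLw : (1 <= Lw)%nat) by (unfold Lw; nia). assert (HLz : (1 <= Lz)%nat) by (unfold Lz; nia).
  assert (HC : (Cz K w z * Lw <= 3 * Lz)%nat).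
  { unfold Cz. fold Lw Lz. pose proof (div_bounds (Lz + length z - length w) HLw) as D.
    rewrite Nat.mul_add_distr_r, (Nat.mul_comm _ Lw). unfold Lw, Lz in *. nia. }
  set (d := (M * Lw / Lz)%nat). pose proof (div_bounds (M * Lw) HLz) as D. fold d in D.
  assert (Cz K w z * d * Lz <= 3 * M * Lz)%nat.
  { apply Nat.le_trans with (Cz K w z * (M * Lw))%nat. rewrite <- Nat.mul_assoc. apply Nat.mul_le_mono_l. lia.
    apply Nat.le_trans with (M * (Cz K w z * Lw))%nat. nia. nia. }
  assert (Cz K w z * d <= 3 * M)%nat.
  { destruct (Nat.le_gt_cases (Cz K w z * d) (3 * M)); auto.
    assert ((3 * M + 1) * Lz <= Cz K w z * d * Lz)%nat by (apply Nat.mul_le_mono_r; lia). nia. }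
  nia.
Qed.

Unset Implicit Arguments.
Theorem mainTheorem18 (A : Type) (enumA : list A) (HA : forall a : A, In a enumA)
  (X : (nat -> A) -> Prop) (K : nat) (w : list A) (q : nat) :
  subshift X -> transitive X -> aperiodic X -> RBC X -> growth_constant X K ->
  lang X w -> min_valid_step X w q ->
  (forall (x : nat -> A) (z : list A), X x -> exit_word X w q z ->
      Dens K w x >= / INR (3 * K + 9) * Dens K z x) /\
  (forall l : list (list A), NoDup l -> (forall z, In z l <-> exit_word X w q z) ->
      l <> [] ->
      forall x : nat -> A, X x ->
        exists z', exit_word X w q z' /\
          Dens K z' x >= / INR ((2 * K + 3) * length l) * Dens K w x).
Proof.
  intros HX Htr _ _ _ Hw [[[Hn2 [Hq1 [H2q Hper]]] _] _].
  split.
  - intros x z Hx Hz. apply exit_word_iff in Hz as [Hsh Hzl].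
    destruct (exit_decomp Hper Hq1 H2q Hsh) as [lp [ls [rr [Hr [Hlp [Hls [Hlen Hocc]]]]]]].
    set (n := length w) in *. set (m := length z) in *.
    set (Lw := ((K+1) * n)%nat). set (Lz := ((K+1) * m)%nat).
    set (H := (1 + ((rr-1)*q) / Lw)%nat).
    assert (HLw : (1 <= Lw)%nat) by (unfold Lw; nia). assert (HLz : (1 <= Lz)%nat) by (unfold Lz; nia).
    assert (Hcount : forall N, (H * rsum K z x N <= 2 * rsum K w x ((N * Lz + m) / Lw + H + 1))%nat).
    { intros N. apply (@count1 A K w z q x lp rr N); auto; lia. }
    assert (Hcmp := @compare1 A K w z x H Lw Lz (m + (H+1)*Lw)%nat (fun N => ((N * Lz + m) / Lw + H + 1)%nat) HLw HLz ltac:(unfold H; lia) Hcount).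
    destruct (Dens_spec K z x) as [_ [Hz0 _]].
    assert (Hkey : (2 * Lz <= H * Lw * (3*K+9))%nat).
    { pose proof (div_bounds ((rr-1)*q) HLw) as D.
      assert (Hm : (m <= H * n * (K+3))%nat).
      { unfold H. set (d := ((rr-1)*q / Lw)%nat) in *. unfold Lw in D. nia. }
      unfold Lw, Lz. nia. }
    assert (Hg : / INR (3*K+9) <= INR H * INR Lw / (2 * INR Lz)).
    { assert (R1 : 0 < INR (3*K+9)) by (apply lt_0_INR; lia).
      assert (R2 : 1 <= INR Lz) by (apply (le_INR 1); auto).
      apply Rmult_le_reg_r with (2 * INR Lz * INR (3*K+9)); [nra|].
      replace (/ INR (3 * K + 9) * (2 * INR Lz * INR (3 * K + 9))) with (2 * INR Lz) by (field; lra).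
      replace (INR H * INR Lw / (2 * INR Lz) * (2 * INR Lz * INR (3 * K + 9))) with (INR H * INR Lw * INR (3*K+9)) by (field; lra).
      rewrite <- !mult_INR. replace 2 with (INR 2) by reflexivity. rewrite <- mult_INR. apply le_INR. auto. }
    assert (Hcmp' : Dens K w x >= INR H * INR Lw / (2 * INR Lz) * Dens K z x).
    { apply Hcmp.
      - intros N. simpl. pose proof (div_bounds (N * Lz + m) HLw) as D. set (d := ((N * Lz + m) / Lw)%nat) in *.
        rewrite !Nat.mul_add_distr_r, (Nat.mul_comm d Lw). lia.
      - intros N. assert (N <= (N * Lz + m) / Lw)%nat; [|lia].
        rewrite <- (Nat.div_mul N Lw) at 1 by lia. apply Nat.Div0.div_le_mono. unfold Lw, Lz. nia. }
    assert (/ INR (3 * K + 9) * Dens K z x <= INR H * INR Lw / (2 * INR Lz) * Dens K z x)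
      by (apply Rmult_le_compat_r; auto).
    lra.
  - intros l Hnd Hiff Hne x Hx.
    assert (Hiff' : forall z, In z l <-> exit_shape w q z /\ lang X z).
    { intros z. rewrite Hiff. apply exit_word_iff. }
    destruct l as [|z0 l0]; [congruence|].
    assert (Hz0 := proj1 (Hiff' z0) (or_introl eq_refl)). destruct Hz0 as [Hz0sh Hz0l].
    set (l := z0 :: l0) in *.
    set (Rl := lsum l (@length A)).
    assert (HnoP : ~ lang X (qpow w q (Rl + 2))).
    { apply (no_long_run HX Htr Hper Hq1 H2q Hz0sh Hz0l). intros z Hs Hlz.
      apply lsum_in. apply Hiff'. auto. }
    assert (Hlen : forall z, In z l -> (1 <= length w <= length z)%nat).
    { intros z Hz. apply Hiff' in Hz as [Hs _].
      destruct (exit_decomp Hper Hq1 H2q Hs) as [lp [ls [rr [_ [_ [_ [Hle _]]]]]]]. rewrite Hle. generalize ((rr-1)*q)%nat. intros. lia. }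
    destruct (argmax_list (fun z => Dens K z x) Hne) as [z' [Hz' Hmax]].
    exists z'. split; [apply Hiff; auto|].
    assert (HDs := proj2 (Dens_spec K z' x)).
    assert (Hmain : 3 * INR (length l) * Dens K z' x >= Dens K w x).
    { apply (compare2 K w x l ((Rl+1)*q) (Cz K w) (Nz K w)); auto.
      - intros M. apply (count2 K Rl x l M Hper Hq1 H2q HnoP Hx).
        + intros z Hs Hlz. apply Hiff'. auto.
        + intros z Hz. apply Hlen; auto.
      - intros z M Hz. apply CN_bound. auto.
      - intros z N0 Hz. exists (N0 * ((K+1) * length z))%nat. intros M HM.
        unfold Nz. assert (N0 <= M * ((K+1) * length w) / ((K+1) * length z))%nat; [|lia].
        assert (Hl := Hlen z Hz).
        rewrite <- (Nat.div_mul N0 ((K+1) * length z)) at 1 by nia. apply Nat.Div0.div_le_mono. nia.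
      - intros. unfold Nz. lia. }
    set (Dw := Dens K w x) in *. set (Dz := Dens K z' x) in *.
    assert (Hl1 : 1 <= INR (length l)) by (apply (le_INR 1); simpl; lia).
    assert (HK : 3 * INR (length l) <= INR ((2 * K + 3) * length l)).
    { replace 3 with (INR 3) by (simpl; lra). rewrite <- mult_INR. apply le_INR. nia. }
    assert (Hpos : 0 < INR ((2 * K + 3) * length l)) by lra.
    apply Rle_ge. apply Rmult_le_reg_l with (INR ((2 * K + 3) * length l)); auto.
    rewrite <- Rmult_assoc, Rinv_r by lra. rewrite Rmult_1_l.
    assert (Dw >= 0) by (unfold Dw; destruct (Dens_spec K w x) as [_ [? _]]; lra).
    nra.
Qed.
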